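(* For $n\ge 1$ let $\gamma_n$ be the unique closed geodesic on the modular surface $\Sigma_{\mathrm{Mod}}$ lifting to the geodesic $1/n$ on the once-punctured torus $\Sigma_{1,1}$ (under the 6-fold cover $\Sigma_{1,1}\to\Sigma_{\mathrm{Mod}}$). For $\Gamma_n:=\{\gamma_i\}_{i=1}^n$, the total length satisfies $\ell(\Gamma_n)\asymp n^2$.
   Context: $\Sigma_{\mathrm{Mod}}=\mathbb{H}^2/\mathrm{PSL}(2,\mathbb{Z})$ with its hyperbolic metric; $\Sigma_{1,1}$ is the once-punctured torus with the pulled-back metric, and $1/n$ denotes the closed geodesic in the free homotopy class of the simple closed curve of slope $1/n$. $\ell(\Gamma_n)=\sum_{i=1}^n\ell(\gamma_i)$. $f(n)\asymp g(n)$ means there are constants $A>0,B,C>0,D$ with $Ag(n)+B\le f(n)\le Cg(n)+D$ for all $n$. *)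

(* Defs.v *)
From Stdlib Require Import Reals ZArith Lra.
From Coquelicot Require Import Coquelicot.
Open Scope R_scope.

Record M2 := mkM2 { m11 : Z; m12 : Z; m21 : Z; m22 : Z }.

Definition M2mul (A B : M2) : M2 :=
  mkM2 (m11 A * m11 B + m12 A * m21 B)%Z (m11 A * m12 B + m12 A * m22 B)%Z
       (m21 A * m11 B + m22 A * m21 B)%Z (m21 A * m12 B + m22 A * m22 B)%Z.

Definition M2id : M2 := mkM2 1 0 0 1.
Definition M2neg (A : M2) : M2 := mkM2 (- m11 A) (- m12 A) (- m21 A) (- m22 A).

Fixpoint M2pow (A : M2) (k : nat) : M2 :=
  match k with O => M2id | S k' => M2mul A (M2pow A k') end.

Definition M2det (A : M2) : Z := (m11 A * m22 A - m12 A * m21 A)%Z.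

Definition inSL2Z (A : M2) : Prop := M2det A = 1%Z.

(* Equality in PSL(2,Z) = SL(2,Z)/{+-1}. *)
Definition PSLeq (A B : M2) : Prop := A = B \/ A = M2neg B.

(* Hyperbolic plane: upper half-plane, points (x,y) with y > 0. *)
Definition arcosh (t : R) : R := ln (t + sqrt (t * t - 1)).

Definition hdist (x1 y1 x2 y2 : R) : R :=
  arcosh (1 + ((x1 - x2)^2 + (y1 - y2)^2) / (2 * y1 * y2)).

(* Moebius action z |-> (a z + b)/(c z + d) of a real matrix with det 1,
   z = x + i y. *)
Definition mob_den (g : M2) (x y : R) : R :=
  (IZR (m21 g) * x + IZR (m22 g))^2 + (IZR (m21 g) * y)^2.
Definition mob_x (g : M2) (x y : R) : R :=
  ((IZR (m11 g) * x + IZR (m12 g)) * (IZR (m21 g) * x + IZR (m22 g))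
    + IZR (m11 g) * IZR (m21 g) * y^2) / mob_den g x y.
Definition mob_y (g : M2) (x y : R) : R :=
  IZR (M2det g) * y / mob_den g x y.

(* For a hyperbolic
   g in PSL(2,Z) this is the length of the closed geodesic on the modular
   surface in the free homotopy class / conjugacy class of g. *)
Definition tlen (g : M2) : R :=
  real (Glb_Rbar (fun t => exists x y, 0 < y /\
                        t = hdist x y (mob_x g x y) (mob_y g x y))).

(* Standard free generators of the commutator subgroup Gamma' of PSL(2,Z),
   Gamma' = pi_1(Sigma_{1,1}) (the modular torus). *)
Definition gen_a : M2 := mkM2 1 1 1 2.
Definition gen_b : M2 := mkM2 1 (-1) (-1) 2.

(* Element of pi_1(Sigma_{1,1}) representing the simple closed curve of
   slope 1/n, i.e. homology class n*a + 1*b: the word a^n b. *)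
Definition slope_word (n : nat) : M2 := M2mul (M2pow gen_a n) gen_b.

Definition PSL_primitive (g : M2) : Prop :=
  inSL2Z g /\
  ~ (exists (h : M2) (k : nat), inSL2Z h /\ (2 <= k)%nat /\ PSLeq g (M2pow h k)).

(* g represents the (primitive) closed geodesic on the modular surface
   lifting to the geodesic 1/n on Sigma_{1,1}: g is primitive in PSL(2,Z)
   and a positive power of g equals the slope-1/n element (in PSL(2,Z)). *)
Definition gamma_rep (n : nat) (g : M2) : Prop :=
  PSL_primitive g /\ exists k : nat, (1 <= k)%nat /\ PSLeq (M2pow g k) (slope_word n).

Fixpoint total_length (g : nat -> M2) (n : nat) : R :=
  match n with
  | O => 0
  | S n' => total_length g n' + tlen (g (S n'))
  end.

(* Main.v *)
Require Import Defs.
From Stdlib Require Import Reals ZArith Lra Lia Psatz.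
From Coquelicot Require Import Coquelicot.
Open Scope R_scope.

Lemma Qnonneg a b c d x y R0 u :
  R0 = c*(x^2-y^2) + (d-a)*x - b ->
  u = 2*c*x + d - a ->
  0 <= R0^2 + y^2*u^2 - y^2*((d-a)^2 + 4*b*c).
Proof.
  intros HR Hu.
  destruct (Req_dec c 0) as [Hc|Hc].
  - subst. match goal with |- 0 <= ?e => replace e with ((0*(x^2-y^2)+(d-a)*x-b)^2) by ring end. apply pow2_ge_0.
  - assert (E: 16*c^2*(R0^2 + y^2*u^2 - y^2*((d-a)^2 + 4*b*c)) =
              (u^2 - ((d-a)^2 + 4*b*c) + 4*c^2*y^2)^2) by (subst; ring).
    assert (0 < 16*c^2) by (assert (0 < c^2) by (apply pow2_gt_0; auto); lra).
    assert (0 <= (u^2 - ((d-a)^2 + 4*b*c) + 4*c^2*y^2)^2) by apply pow2_ge_0.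
    nra.
Qed.

Lemma arg_lower a b c d x y den X Y : a*d - b*c = 1 -> 0 < y ->
  den = (c*x+d)^2 + (c*y)^2 ->
  X = ((a*x+b)*(c*x+d) + a*c*y^2)/den ->
  Y = (a*d-b*c)*y/den ->
  0 < Y /\ (a+d)^2/2 - 1 <= 1 + ((x - X)^2 + (y - Y)^2)/(2*y*Y).
Proof.
  intros He Hy Hd HX HY0.
  assert (Hden: 0 < den).
  { rewrite Hd. destruct (Req_dec c 0) as [Hc|Hc].
    - subst c. assert (d <> 0) by (intro; subst; lra).
      assert (0 < d^2) by (apply pow2_gt_0; auto). nra.
    - assert (0 < (c*y)^2) by (apply pow2_gt_0; apply Rmult_integral_contrapositive; split; lra).
      assert (0 <= (c*x+d)^2) by apply pow2_ge_0. lra. }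
  assert (H1: (x - X)^2 + (y - Y)^2 =
     ((c*(x^2-y^2) + (d-a)*x - b)^2 + (y*(2*c*x + d - a))^2)/den).
  { rewrite HX, HY0. rewrite Hd in *. field. lra. }
  assert (HY: Y = y/den) by (rewrite HY0, He; field; lra).
  split. { rewrite HY. apply Rdiv_lt_0_compat; lra. }
  rewrite H1, HY.
  assert (HQ := Qnonneg a b c d x y _ _ eq_refl eq_refl).
  set (Q := (c*(x^2-y^2) + (d-a)*x - b)^2 + (y*(2*c*x + d - a))^2).
  assert (E: 1 + Q/den/(2*y*(y/den)) - ((a+d)^2/2 - 1) =
          (Q - y^2*((d-a)^2 + 4*b*c)) / (2*y^2)).
  { replace ((a+d)^2) with ((d-a)^2 + 4*b*c + 4) by (ring_simplify; nra).
    field. lra. }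
  assert (0 <= (Q - y^2*((d-a)^2 + 4*b*c)) / (2*y^2)).
  { apply Rdiv_le_0_compat. subst Q. nra. nra. }
  lra.
Qed.

Lemma arg_upper a b c d den X Y : a*d - b*c = 1 ->
  den = (c*0+d)^2 + (c*1)^2 ->
  X = ((a*0+b)*(c*0+d) + a*c*1^2)/den ->
  Y = (a*d-b*c)*1/den ->
  1 + ((0 - X)^2 + (1 - Y)^2)/(2*1*Y) = (a^2+b^2+c^2+d^2)/2.
Proof.
  intros He Hd HX HY.
  assert (Hden: 0 < den).
  { rewrite Hd. destruct (Req_dec c 0) as [Hc|Hc].
    - subst c. assert (d <> 0) by (intro; subst; lra).
      assert (0 < d^2) by (apply pow2_gt_0; auto). nra.
    - assert (0 < (c*1)^2) by (apply pow2_gt_0; lra).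
      assert (0 <= (c*0+d)^2) by apply pow2_ge_0. lra. }
  rewrite He in HY.
  assert (K: (b*d+a*c)^2 + 1 - (c^2+d^2)*(a^2+b^2) = 0).
  { replace 1 with ((a*d-b*c)^2) at 1 by (rewrite He; ring). ring. }
  assert (E: 1 + ((0 - X)^2 + (1 - Y)^2)/(2*1*Y) - (a^2+b^2+c^2+d^2)/2
     = ((b*d+a*c)^2 + 1 - (c^2+d^2)*(a^2+b^2)) / (2*den)).
  { rewrite HX, HY. rewrite Hd in *. field. lra. }
  rewrite K in E. unfold Rdiv in E. rewrite Rmult_0_l in E. lra.
Qed.

Lemma arcosh_ge u : 1 <= u -> ln u <= arcosh u.
Proof.
  intro H. unfold arcosh. apply ln_le. lra.
  assert (0 <= sqrt (u*u-1)) by apply sqrt_pos. lra.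
Qed.

Lemma arcosh_le u : 1 <= u -> arcosh u <= ln (2*u).
Proof.
  intro H. unfold arcosh. apply ln_le.
  assert (0 <= sqrt (u*u-1)) by apply sqrt_pos. lra.
  assert (sqrt (u*u-1) <= u).
  { assert (Hs: sqrt (u*u) = u) by (apply sqrt_square; lra).
    eapply Rle_trans; [apply sqrt_le_1_alt | rewrite Hs; lra]. lra. }
  lra.
Qed.

Lemma glb_bounds (E : R -> Prop) m M t0 : E t0 -> t0 <= M -> (forall t, E t -> m <= t) ->
  m <= real (Glb_Rbar E) <= M.
Proof.
  intros H0 HM Hm.
  destruct (Glb_Rbar_correct E) as [Hlb Hglb].
  assert (A := Hlb t0 H0).
  assert (B : Rbar_le m (Glb_Rbar E)).
  { apply Hglb. intros t Ht. simpl. apply Hm; auto. }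
  destruct (Glb_Rbar E) as [r| |]; simpl in *; try contradiction; lra.
Qed.

Lemma IZR_det G : IZR (M2det G) = IZR (m11 G) * IZR (m22 G) - IZR (m12 G) * IZR (m21 G).
Proof. unfold M2det. rewrite minus_IZR, !mult_IZR. reflexivity. Qed.

Lemma tlen_bounds G : M2det G = 1%Z ->
  let a := IZR (m11 G) in let b := IZR (m12 G) in
  let c := IZR (m21 G) in let d := IZR (m22 G) in
  4 <= (a+d)^2 ->
  ln ((a+d)^2/4) <= tlen G <= ln (a^2+b^2+c^2+d^2).
Proof.
  intros Hdet a b c d HT.
  assert (He : a*d - b*c = 1).
  { subst a b c d. rewrite <- IZR_det, Hdet. reflexivity. }
  unfold tlen. apply (glb_bounds _ _ _ (hdist 0 1 (mob_x G 0 1) (mob_y G 0 1))).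
  - exists 0, 1. split. lra. reflexivity.
  - unfold hdist.
    rewrite (arg_upper a b c d (mob_den G 0 1) (mob_x G 0 1) (mob_y G 0 1) He); try reflexivity.
    2: { unfold mob_y. rewrite IZR_det. reflexivity. }
    replace (a^2+b^2+c^2+d^2) with (2*((a^2+b^2+c^2+d^2)/2)) at 2 by field.
    apply arcosh_le. clear HT. clearbody a b c d.
    assert (0 <= (a-d)^2 + (b+c)^2) by (apply Rplus_le_le_0_compat; apply pow2_ge_0).
    nra.
  - intros t [x [y [Hy ->]]].
    destruct (arg_lower a b c d x y (mob_den G x y) (mob_x G x y) (mob_y G x y) He Hy)
      as [HY Hl]; try reflexivity.
    { unfold mob_y. rewrite IZR_det. reflexivity. }
    unfold hdist.
    eapply Rle_trans; [| apply arcosh_ge].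
    + apply ln_le. nra. fold a b c d. clearbody a b c d. lra.
    + fold a b c d. clearbody a b c d. lra.
Qed.

Open Scope Z_scope.

Fixpoint pq (n : nat) : Z * Z :=
  match n with O => (1, 0) | S n' => let (p, q) := pq n' in (p + q, p + 2*q) end.

Lemma pq_S n : pq (S n) = (fst (pq n) + snd (pq n), fst (pq n) + 2 * snd (pq n)).
Proof. simpl. destruct (pq n); reflexivity. Qed.

Lemma apow n : M2pow gen_a n =
  mkM2 (fst (pq n)) (snd (pq n)) (snd (pq n)) (fst (pq n) + snd (pq n)).
Proof.
  induction n as [|n IH]. reflexivity.
  simpl M2pow. rewrite IH, pq_S. unfold M2mul, gen_a. cbn [m11 m12 m21 m22 fst snd]. f_equal; ring.
Qed.

Lemma pq_props n : let p := fst (pq n) in let q := snd (pq n) in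
  1 <= p /\ 0 <= q <= 2*p /\ p*p + p*q - q*q = 1 /\ 2 ^ Z.of_nat n <= p + q
  /\ p <= 3 ^ Z.of_nat n.
Proof.
  induction n as [|n IH]; intros p q.
  - cbn in *. subst p q. lia.
  - subst p q. rewrite pq_S. cbn [fst snd]. destruct IH as (H1 & H2 & H3 & H4 & H5).
    rewrite Nat2Z.inj_succ, !Z.pow_succ_r by lia.
    repeat split; nia.
Qed.

Lemma slope_eq n : slope_word n =
  let p := fst (pq n) in let q := snd (pq n) in mkM2 (p - q) (2*q - p) (- p) (2*p + q).
Proof. unfold slope_word. rewrite apow. unfold M2mul, gen_b. cbn [m11 m12 m21 m22 fst snd]. f_equal; ring. Qed.

Fixpoint useq (t : Z) (k : nat) : Z * Z :=
  match k with O => (0, -1) | S k' => let (u, v) := useq t k' in (t*u - v, u) end.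

Lemma useq_S t k : useq t (S k) = (t * fst (useq t k) - snd (useq t k), fst (useq t k)).
Proof. simpl. destruct (useq t k); reflexivity. Qed.

Lemma pow_form a b c d k : a*d - b*c = 1 ->
  M2pow (mkM2 a b c d) k = mkM2 (fst (useq (a+d) k) * a - snd (useq (a+d) k))
     (fst (useq (a+d) k) * b) (fst (useq (a+d) k) * c) (fst (useq (a+d) k) * d - snd (useq (a+d) k))
  /\ fst (useq (a+d) k) * fst (useq (a+d) k) - (a+d) * fst (useq (a+d) k) * snd (useq (a+d) k)
      + snd (useq (a+d) k) * snd (useq (a+d) k) = 1.
Proof.
  intros Hd.
  induction k as [|k IH].
  - simpl. split. reflexivity. ring.
  - rewrite useq_S. cbn [fst snd]. destruct IH as [IH1 IH2].
    change (M2pow (mkM2 a b c d) (S k)) with (M2mul (mkM2 a b c d) (M2pow (mkM2 a b c d) k)).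
    rewrite IH1.
    set (u := fst (useq (a+d) k)) in *. set (v := snd (useq (a+d) k)) in *.
    split.
    + assert (u*a*d - u*b*c = u) by (transitivity (u*(a*d-b*c)); [ring | rewrite Hd; ring]). unfold M2mul. cbn [m11 m12 m21 m22]. f_equal; nia.
    + nia.
Qed.

Lemma useq_grow t k : 3 <= Z.abs t ->
  Z.abs (fst (useq t (S k))) >= 2 * Z.abs (fst (useq t k)) + 1.
Proof.
  intro Ht. induction k as [|k IH].
  - simpl. lia.
  - assert (Hs : snd (useq t (S k)) = fst (useq t k)) by (rewrite useq_S; reflexivity).
    rewrite (useq_S t (S k)). cbn [fst]. rewrite Hs.
    set (u := fst (useq t (S k))) in *. set (v := fst (useq t k)) in *.
    assert (Z.abs (t*u) = Z.abs t * Z.abs u) by apply Z.abs_mul.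
    assert (Z.abs t * Z.abs u >= 3 * Z.abs u) by nia.
    lia.
Qed.

Lemma useq_big t k : 3 <= Z.abs t -> (2 <= k)%nat -> 3 <= Z.abs (fst (useq t k)).
Proof.
  intros Ht Hk. destruct k as [|[|k]]; try lia.
  assert (A := useq_grow t (S k) Ht). assert (B := useq_grow t k Ht). lia.
Qed.

Lemma key n G : gamma_rep n G ->
  let p := fst (pq n) in let q := snd (pq n) in
  (m11 G + m22 G)^2 = 9*p^2 /\
  m11 G ^2 + m12 G ^2 + m21 G ^2 + m22 G ^2 = (p-q)^2 + (2*q-p)^2 + p^2 + (2*p+q)^2.
Proof.
  intros [[Hdet _] [k [Hk Heq]]] p q.
  destruct G as [a b c d]. unfold inSL2Z, M2det in Hdet. cbn [m11 m12 m21 m22] in *.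
  destruct (pow_form a b c d k Hdet) as [Hp Hinv].
  set (t := a + d) in *.
  set (u := fst (useq t k)) in *. set (v := snd (useq t k)) in *.
  rewrite Hp, slope_eq in Heq. cbv zeta in Heq. fold p q in Heq. unfold PSLeq, M2neg in Heq. cbn [m11 m12 m21 m22] in Heq.
  destruct (pq_props n) as (H1 & H2 & H3 & H4 & H5). fold p q in H1, H2, H3, H4, H5.
  assert (E : exists s, (s = 1 \/ s = -1) /\
     u * a - v = s*(p-q) /\ u * b = s*(2*q-p) /\ u * c = s*(-p) /\ u * d - v = s*(2*p+q)).
  { destruct Heq as [Heq|Heq];
      pose proof (f_equal m11 Heq) as F1; pose proof (f_equal m12 Heq) as F2;
      pose proof (f_equal m21 Heq) as F3; pose proof (f_equal m22 Heq) as F4;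
      cbn [m11 m12 m21 m22] in F1, F2, F3, F4.
    - exists 1. lia.
    - exists (-1). lia. }
  destruct E as (s & Hs & E1 & E2 & E3 & E4).
  assert (Hss : s*s = 1) by (destruct Hs; subst; reflexivity).
  assert (Hu : u*u*(b^2 - 5*c^2) = -4).
  { transitivity ((u*b)^2 - 5*(u*c)^2). ring. rewrite E2, E3.
    transitivity ((s*s)*(-4*(p*p+p*q-q*q))). ring. rewrite Hss, H3. reflexivity. }
  assert (Hu4 : u*u <= 4).
  { set (X := b^2 - 5*c^2) in *.
    assert (0 <= u*u) by apply Z.square_nonneg.
    destruct (Z_lt_le_dec X 0).
    - assert (u*u*X <= u*u*(-1)) by (apply Z.mul_le_mono_nonneg_l; lia). lia.
    - assert (0 <= u*u*X) by (apply Z.mul_nonneg_nonneg; lia). lia. }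
  assert (HT : t*u - 2*v = 3*s*p).
  { transitivity ((u*a - v) + (u*d - v)). unfold t; ring. rewrite E1, E4. ring. }
  assert (Ht2 : (t*t-4)*(u*u) = 9*p*p - 4).
  { transitivity ((t*u-2*v)^2 - 4*(u*u - t*u*v + v*v)). ring. rewrite Hinv, HT.
    transitivity ((s*s)*9*p*p - 4). ring. rewrite Hss. ring. }
  assert (Ht : 3 <= Z.abs t).
  { assert (0 <= u*u) by apply Z.square_nonneg.
    assert (5 <= t*t).
    { destruct (Z_lt_le_dec (t*t) 5) as [Hlt|]; auto.
      assert ((t*t-4)*(u*u) <= 0*(u*u)) by (apply Z.mul_le_mono_nonneg_r; lia).
      assert (1*1 <= p*p) by (apply Z.mul_le_mono_nonneg; lia). lia. }
    destruct (Z_lt_le_dec (Z.abs t) 3) as [Hlt|]; auto.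
    assert (Hab : Z.abs t * Z.abs t <= 2*2) by (apply Z.mul_le_mono_nonneg; lia).
    rewrite <- Z.abs_mul in Hab. assert (Z.abs (t*t) = t*t) by (apply Z.abs_eq; lia). lia. }
  assert (k = 1%nat).
  { destruct (Nat.eq_dec k 1) as [|Hk1]; auto.
    assert (3 <= Z.abs u) by (apply useq_big; auto; lia).
    assert (Hab : 3*3 <= Z.abs u * Z.abs u) by (apply Z.mul_le_mono_nonneg; lia).
    rewrite <- Z.abs_mul in Hab. assert (Z.abs (u*u) = u*u) by (apply Z.abs_eq; apply Z.square_nonneg). lia. }
  subst k. assert (Hu1 : u = 1) by (unfold u; simpl; ring). assert (Hv0 : v = 0) by reflexivity.
  rewrite Hu1, Hv0 in *.
  destruct Hs; subst s.
  - assert (a = p - q) by lia. assert (b = 2*q-p) by lia. assert (c = -p) by lia. assert (d = 2*p+q) by lia.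
    subst t; subst a b c d. split; ring.
  - assert (a = -(p - q)) by lia. assert (b = -(2*q-p)) by lia. assert (c = p) by lia. assert (d = -(2*p+q)) by lia.
    subst t; subst a b c d. split; ring.
Qed.

Open Scope R_scope.

Lemma Zfacts m G : gamma_rep (S m) G -> let p := fst (pq (S m)) in
  ((m11 G + m22 G)*(m11 G + m22 G) = 9*p*p /\
   m11 G*m11 G + m12 G*m12 G + m21 G*m21 G + m22 G*m22 G <= 27*p*p /\
   2^Z.of_nat m <= p /\ p <= 3^Z.of_nat (S m) /\ 1 <= p)%Z.
Proof.
  intros Hg p.
  pose proof (key _ _ Hg) as K. cbv zeta in K. destruct K as [K1 K2].
  fold p in K1, K2.
  pose proof (pq_props (S m)) as PP. cbv zeta in PP.
  destruct PP as (H1 & H2 & H3 & H4 & H5). fold p in H1, H2, H3, H4, H5.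
  pose proof (pq_props m) as PP. cbv zeta in PP. destruct PP as (_ & _ & _ & G4 & _).
  assert (Hp : p = (fst (pq m) + snd (pq m))%Z) by (unfold p; rewrite pq_S; reflexivity).
  rewrite <- Hp in G4.
  set (q := snd (pq (S m))) in *. clearbody p q. clear Hp H4 Hg.
  assert (K2' : (m11 G*m11 G + m12 G*m12 G + m21 G*m21 G + m22 G*m22 G =
     (p-q)*(p-q) + (2*q-p)*(2*q-p) + p*p + (2*p+q)*(2*p+q))%Z) by (transitivity (m11 G ^2 + m12 G ^2 + m21 G ^2 + m22 G ^2)%Z; [ring | rewrite K2; ring]).
  assert (K1' : ((m11 G + m22 G)*(m11 G + m22 G) = 9*p*p)%Z) by (transitivity ((m11 G + m22 G)^2)%Z; [ring | rewrite K1; ring]).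
  clear K1 K2.
  assert (0 <= p*q)%Z by (apply Z.mul_nonneg_nonneg; lia).
  assert (Hqq : (q*q <= (2*p)*(2*p))%Z) by (apply Z.mul_le_mono_nonneg; lia).
  replace ((2*p)*(2*p))%Z with (4*(p*p))%Z in Hqq by ring.
  split; [exact K1'|]. split.
  { rewrite K2'.
    replace ((p-q)*(p-q) + (2*q-p)*(2*q-p) + p*p + (2*p+q)*(2*p+q))%Z with (7*(p*p) - 2*(p*q) + 6*(q*q))%Z by ring.
    replace (27*p*p)%Z with (27*(p*p))%Z by ring.
    set (pp := (p*p)%Z) in *. set (pq' := (p*q)%Z) in *. set (qq := (q*q)%Z) in *. lia. }
  split; [exact G4|]. split; [exact H5 | exact H1].
Qed.

Lemma term_bounds m G : gamma_rep (S m) G ->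
  INR m * ln 4 <= tlen G <= ln 27 + INR (S m) * ln 9.
Proof.
  intros Hg. destruct (Zfacts m G Hg) as (F1 & F2 & F3 & F4 & F5).
  set (p := fst (pq (S m))) in *.
  destruct Hg as [[Hdet _] _].
  pose proof (tlen_bounds G Hdet) as TB. cbv zeta in TB.
  set (a := IZR (m11 G)) in *. set (b := IZR (m12 G)) in *.
  set (c := IZR (m21 G)) in *. set (d := IZR (m22 G)) in *.
  set (P := IZR p).
  apply (f_equal IZR) in F1. rewrite !mult_IZR, plus_IZR in F1. fold a d P in F1.
  apply IZR_le in F2. rewrite !plus_IZR, !mult_IZR in F2. fold a b c d P in F2.
  apply IZR_le in F3. rewrite <- pow_IZR in F3. fold P in F3.
  apply IZR_le in F4. rewrite <- pow_IZR in F4. fold P in F4.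
  apply IZR_le in F5. fold P in F5.
  assert (Ha2 : (a+d)^2 = 9*P*P) by (rewrite <- F1; ring).
  destruct TB as [TL TU]. { rewrite Ha2. nra. }
  assert (H2m : 0 < 2^m) by (apply pow_lt; lra).
  assert (H3m : 0 < 3^(S m)) by (apply pow_lt; lra).
  split.
  - eapply Rle_trans; [| exact TL].
    rewrite <- ln_pow by lra. apply ln_le. apply pow_lt; lra.
    rewrite Ha2. replace 4 with (2*2) at 1 by ring. rewrite Rpow_mult_distr. nra.
  - eapply Rle_trans; [exact TU |].
    rewrite <- ln_pow by lra. rewrite <- ln_mult by (try lra; apply pow_lt; lra).
    apply ln_le.
    + assert (2 <= a^2 + b^2 + c^2 + d^2).
      { assert (0 <= (a-d)^2) by apply pow2_ge_0. nra. }
      lra.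
    + replace 9 with (3*3) by ring. rewrite Rpow_mult_distr.
      assert (P*P <= 3^(S m) * 3^(S m)) by nra. nra.
Qed.

Lemma ln_pos x : 1 < x -> 0 < ln x.
Proof. intro. rewrite <- ln_1. apply ln_increasing; lra. Qed.

Lemma sum_bounds g : (forall n : nat, (1 <= n)%nat -> gamma_rep n (g n)) ->
  forall n, ln 4 * (INR n * (INR n - 1))/2 <= total_length g n <=
            ln 27 * INR n + ln 9 * (INR n * (INR n + 1))/2.
Proof.
  intros Hg n. induction n as [|n IH].
  - simpl. lra.
  - simpl total_length. destruct (term_bounds n (g (S n))) as [L U].
    { apply Hg. lia. }
    rewrite S_INR in *. set (x := INR n) in *.
    assert (E1 : ln 4 * ((x + 1) * (x + 1 - 1)) / 2 = ln 4 * (x * (x - 1)) / 2 + x * ln 4) by field.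
    assert (E2 : ln 27 * (x + 1) + ln 9 * ((x + 1) * (x + 1 + 1)) / 2 =
                 ln 27 * x + ln 9 * (x * (x + 1)) / 2 + (ln 27 + (x + 1) * ln 9)) by field.
    lra.
Qed.

Theorem lemma7p2 :
  forall g : nat -> M2,
    (forall n : nat, (1 <= n)%nat -> gamma_rep n (g n)) ->
    exists A B C D : R, 0 < A /\ 0 < C /\
      forall n : nat,
        A * (INR n)^2 + B <= total_length g n /\
        total_length g n <= C * (INR n)^2 + D.
Proof.
  intros g Hg.
  assert (P4 : 0 < ln 4) by (apply ln_pos; lra).
  assert (P27 : 0 < ln 27) by (apply ln_pos; lra).
  assert (P9 : 0 < ln 9) by (apply ln_pos; lra).
  exists (ln 4 / 4), (- (ln 4 / 4)), (ln 27 + ln 9), (ln 27 + ln 9).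
  split. lra. split. lra.
  intro n. destruct (sum_bounds g Hg n) as [L U].
  set (x := INR n) in *.
  split.
  - assert (E : ln 4 * (x * (x - 1)) / 2 - (ln 4 / 4 * x ^ 2 + - (ln 4 / 4)) = ln 4 * (x - 1)^2 / 4) by field.
    assert (0 <= ln 4 * (x - 1)^2 / 4).
    { apply Rmult_le_pos; [apply Rmult_le_pos; [lra | apply pow2_ge_0] | lra]. }
    lra.
  - assert (E : (ln 27 + ln 9) * x ^ 2 + (ln 27 + ln 9) - (ln 27 * x + ln 9 * (x * (x + 1)) / 2)
              = ln 27 * ((x - 1/2)^2 + 3/4) + ln 9 * ((x - 1/2)^2 + 7/4) / 2) by field.
    assert (0 <= ln 27 * ((x - 1/2)^2 + 3/4)).
    { apply Rmult_le_pos; [lra|]. assert (0 <= (x-1/2)^2) by apply pow2_ge_0. lra. }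
    assert (0 <= ln 9 * ((x - 1/2)^2 + 7/4) / 2).
    { apply Rmult_le_pos; [|lra]. apply Rmult_le_pos; [lra|]. assert (0 <= (x-1/2)^2) by apply pow2_ge_0. lra. }
    lra.
Qed.
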